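(* Let $p\ge 2$ and $d\in\{0,1,\dots,9\}$ be integers, and let $n\ge 10^{p-1}$ be an integer. Let $k=\max\{i\in\mathbb N:10^{i+p}\le n\}$, with $k=-1$ if this set is empty, and let $$l=\Big\lfloor\frac{n-(10^{p-1}+d)10^{k+1}}{10^{k+2}}\Big\rfloor+10^{p-2}.$$ Then \begin{align*} P_{(d,n,p)}=\frac{1}{n+1-10^{p-1}}\Big(&\sum_{i=0}^k\Big(\sum_{j=10^{p-2}}^{10^{p-1}-1}\ \sum_{b=(10j+d)10^i}^{(10j+(d+1))10^i-1}\frac{b-((9j+d)10^i+10^{p-2}-1)}{b+1-10^{p-1}}\\ &+\sum_{j=10^{p-2}-1}^{10^{p-1}-1}\ \sum_{a=\max(10^{p+i-1},(10j+(d+1))10^i)}^{\min(10^{p+i}-1,(10(j+1)+d)10^i-1)}\frac{10^i(j+1)-10^{p-2}}{a+1-10^{p-1}}\Big)+ r_{(n,d,p)}\Big), \end{align*} where, if the $p$-th digit of $n$ is $d$, \begin{align*} r_{(n,d,p)}=&\sum_{j=10^{p-2}}^{l}\ \sum_{b=(10j+d)10^{k+1}}^{\min(n,(10j+(d+1))10^{k+1}-1)}\frac{b-((9j+d)10^{k+1}+10^{p-2}-1)}{b+1-10^{p-1}}\\ &+\sum_{j=10^{p-2}-1}^{l-1}\ \sum_{a=\max(10^{p+k},(10j+(d+1))10^{k+1})}^{(10(j+1)+d)10^{k+1}-1}\frac{10^{k+1}(j+1)-10^{p-2}}{a+1-10^{p-1}}, \end{align*} and, if the $p$-th digit of $n$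 is different from $d$, \begin{align*} r_{(n,d,p)}=&\sum_{j=10^{p-2}}^{l}\ \sum_{b=(10j+d)10^{k+1}}^{(10j+(d+1))10^{k+1}-1}\frac{b-((9j+d)10^{k+1}+10^{p-2}-1)}{b+1-10^{p-1}}\\ &+\sum_{j=10^{p-2}-1}^{l}\ \sum_{a=\max(10^{p+k},(10j+(d+1))10^{k+1})}^{\min(n,(10(j+1)+d)10^{k+1}-1)}\frac{10^{k+1}(j+1)-10^{p-2}}{a+1-10^{p-1}}. \end{align*}
   Context: For an integer $x\ge 10^{p-1}$ (so $x$ has at least $p$ decimal digits), the ''$p$-th digit of $x$'' is the $p$-th digit of its decimal expansion counted from the left (most significant digit first). For integers $p\ge2$, $d\in\{0,\dots,9\}$ and $m\ge 10^{p-1}$, let $N_d(m)$ be the number of integers $x$ with $10^{p-1}\le x\le m$ whose $p$-th digit is $d$. For $n\ge 10^{p-1}$ the model is the two-stage random experiment: first choose $m$ uniformly at random in $\{10^{p-1},\dots,n\}$, then choose $x$ uniformly at random in $\{10^{p-1},\dots,m\}$. $P_{(d,n,p)}$ denotes the probability that the $p$-th digit of $x$ is $d$, i.e. $$P_{(d,n,p)}=\frac{1}{n+1-10^{p-1}}\sum_{m=10^{p-1}}^{n}\frac{N_d(m)}{m+1-10^{p-1}}.$$ Sums whose upper index is smaller than the lower index (e.g. $\sum_{i=0}^{-1}$) are zero. *)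

(* Defs.v *)
From mathcomp Require Import all_boot all_order all_algebra.
Set Implicit Arguments. Unset Strict Implicit. Unset Printing Implicit Defensive.
Import Order.TTheory GRing.Theory Num.Theory.
Local Open Scope ring_scope.

(* p-th decimal digit of x counted from the left (x has trunc_log 10 x + 1
   decimal digits when x >= 1). Meaningful for x >= 10^(p-1). *)
Definition pth_digit (p x : nat) : nat :=
  (x %/ 10 ^ (trunc_log 10 x + 1 - p)) %% 10.

Definition Nd (p d m : nat) : nat :=
  count (fun x => pth_digit p x == d) (iota (10 ^ (p - 1)) (m.+1 - 10 ^ (p - 1))).

Definition Prob (d n p : nat) : rat :=
  ((n.+1 - 10 ^ (p - 1))%N%:R)^-1 *
  \sum_(10 ^ (p - 1) <= m < n.+1) ((Nd p d m)%:R / (m.+1 - 10 ^ (p - 1))%N%:R).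

Definition sumZ (a b : int) (F : int -> rat) : rat :=
  if a <= b then \sum_(i < absz (b - a + 1)) F (a + i%:Z) else 0.

(* 10^z for an integer exponent z (only used with z >= 0). *)
Definition p10 (z : int) : int := (10 : int) ^ z.

Definition fracB (p d : nat) (e j b : int) : rat :=
  (b - ((9 * j + d%:Z) * p10 e + p10 (p%:Z - 2) - 1))%:~R /
  (b + 1 - p10 (p%:Z - 1))%:~R.

Definition fracA (p : nat) (e j a : int) : rat :=
  (p10 e * (j + 1) - p10 (p%:Z - 2))%:~R / (a + 1 - p10 (p%:Z - 1))%:~R.

Definition r_term (n d p : nat) (k l : int) : rat :=
  if pth_digit p n == d then
    sumZ (p10 (p%:Z - 2)) l (fun j =>
      sumZ ((10 * j + d%:Z) * p10 (k + 1))
           (Num.min n%:Z ((10 * j + (d%:Z + 1)) * p10 (k + 1) - 1))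
           (fun b => fracB p d (k + 1) j b))
    + sumZ (p10 (p%:Z - 2) - 1) (l - 1) (fun j =>
      sumZ (Num.max (p10 (p%:Z + k)) ((10 * j + (d%:Z + 1)) * p10 (k + 1)))
           ((10 * (j + 1) + d%:Z) * p10 (k + 1) - 1)
           (fun a => fracA p (k + 1) j a))
  else
    sumZ (p10 (p%:Z - 2)) l (fun j =>
      sumZ ((10 * j + d%:Z) * p10 (k + 1))
           ((10 * j + (d%:Z + 1)) * p10 (k + 1) - 1)
           (fun b => fracB p d (k + 1) j b))
    + sumZ (p10 (p%:Z - 2) - 1) l (fun j =>
      sumZ (Num.max (p10 (p%:Z + k)) ((10 * j + (d%:Z + 1)) * p10 (k + 1)))
           (Num.min n%:Z ((10 * (j + 1) + d%:Z) * p10 (k + 1) - 1))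
           (fun a => fracA p (k + 1) j a)).

(* Main.v *)
Require Import Defs.
From mathcomp Require Import all_boot all_order all_algebra.
From mathcomp Require Import zify.
Import Order.TTheory GRing.Theory Num.Theory.
Local Open Scope ring_scope.

Lemma p10n (n : nat) : p10 n = (10 ^ n)%N%:Z.
Proof. rewrite /p10 -exprnP; elim: n => // n IH. by rewrite exprS IH expnS PoszM. Qed.

Definition ex (p m : nat) := (trunc_log 10 m + 1 - p)%N.

Lemma ex_bounds p m : (2 <= p)%N -> (10^(p-1) <= m)%N ->
  (10^(p-1) * 10^(ex p m) <= m < 10^p * 10^(ex p m))%N.
Proof.
move=> hp hm.
have hT: (p-1 <= trunc_log 10 m)%N by apply: trunc_log_max.
have m0 : (0 < m)%N by apply: leq_trans hm; rewrite expn_gt0.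
have /andP[h1 h2] := trunc_log_bounds (isT : (1 < 10)%N) m0.
rewrite -!expnD.
have -> : (p - 1 + ex p m = trunc_log 10 m)%N by rewrite /ex; lia.
have -> : (p + ex p m = (trunc_log 10 m).+1)%N by rewrite /ex; lia.
by rewrite h1.
Qed.

Lemma ex_uniq p m i : (1 <= p)%N -> (10^(p-1) * 10^i <= m < 10^p * 10^i)%N -> ex p m = i.
Proof.
move=> hp /andP[h1 h2]. rewrite /ex (@trunc_log_eq 10 (p-1+i) m) //; first lia.
rewrite expnD h1 /=. have->: ((p-1+i).+1 = p+i)%N by lia. by rewrite expnD.
Qed.

Definition Gf (d P2 X j t m : nat) : int :=
  if t == d then m%:Z - ((9 * j%:Z + d%:Z) * X%:Z + P2%:Z - 1)
  else if (d < t)%N then X%:Z * (j%:Z + 1) - P2%:Z else X%:Z * j%:Z - P2%:Z.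

Definition G p d m : int :=
  let X := (10 ^ (ex p m))%N in let q := (m %/ X)%N in
  Gf d (10 ^ (p - 2)) X (q %/ 10) (q %% 10) m.

Lemma divE (X a s : nat) : (0 < X)%N -> (s < X)%N -> ((a * X + s) %/ X = a)%N.
Proof. move=> hX hs. by rewrite divnMDl // divn_small // addn0. Qed.

Lemma Gform p d m e j t s : ex p m = e -> m = ((10*j+t)*10^e + s)%N -> (t < 10)%N -> (s < 10^e)%N ->
  G p d m = Gf d (10 ^ (p-2)) (10^e) j t m.
Proof.
move=> he hm ht hs. rewrite /G he.
have -> : (m %/ 10^e = 10*j+t)%N by rewrite hm divE // expn_gt0.
rewrite mulnC divE // (_ : ((j * 10 + t) %% 10 = t)%N) //.
by rewrite modnMDl modn_small.
Qed.

Lemma Nd_step p d m : (10^(p-1) <= m)%N -> Nd p d m.+1 = (Nd p d m + (pth_digit p m.+1 == d))%N.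
Proof.
move=> h. rewrite /Nd.
have->: (m.+2 - 10^(p-1) = (m.+1 - 10^(p-1)) + 1)%N by lia.
rewrite iotaD count_cat /=.
have->: (10^(p-1) + (m.+1 - 10^(p-1)) = m.+1)%N by lia.
by rewrite addn0.
Qed.

Lemma Nd_base p d : (2 <= p)%N -> Nd p d (10^(p-1)) = (pth_digit p (10^(p-1)) == d).
Proof.
move=> hp; rewrite /Nd. have->: ((10^(p-1)).+1 - 10^(p-1) = 1)%N by lia.
by rewrite /= addn0.
Qed.

Lemma digitE p x : pth_digit p x = ((x %/ 10^(ex p x)) %% 10)%N.
Proof. by []. Qed.

Lemma mod10 j t : (t < 10)%N -> ((10*j+t) %% 10 = t)%N.
Proof. by move=> ht; rewrite mulnC modnMDl modn_small. Qed.

Ltac gfcases t t' d :=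
  rewrite /Gf; case: (ltngtP t d) => H1; case: (ltngtP t' d) => H2 /=;
  try (subst; lia); try lia.

Lemma Nd_closed p d m : (2<=p)%N -> (d <= 9)%N -> (10^(p-1) <= m)%N -> (Nd p d m)%:Z = G p d m.
Proof.
move=> hp hd hm.
have [P2' hP2] : exists P2', (10^(p-2) = P2'.+1)%N.
  by exists (10^(p-2)).-1; rewrite prednK // expn_gt0.
have hL : (10^(p-1) = 10 * 10^(p-2))%N by rewrite -expnS; congr (expn _ _); lia.
have hP : (10^p = 100 * 10^(p-2))%N by rewrite (_ : 100 = 10^2)%N // -expnD; congr (expn _ _); lia.
rewrite hP2 in hL hP.
rewrite -(subnKC hm). elim: (m - 10^(p-1))%N => [|k IH].
  have e0 : (ex p (10^(p-1)) = 0)%N.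
    apply: ex_uniq; first lia. rewrite hL hP !muln1; lia.
  rewrite addn0 Nd_base // (@Gform p d _ 0 P2'.+1 0 0) //; last by rewrite hL expn0; lia.
  rewrite digitE e0 expn0 divn1 hL modnMr hP2. rewrite /Gf. case: (ltngtP 0 d) => H1 /=; try lia.
clear hm m. set m := (10^(p-1) + k)%N. rewrite addnS Nd_step ?leq_addr // PoszD IH.
have hm' : (10^(p-1) <= m)%N by rewrite leq_addr.
have /andP[b1 b2] := (@ex_bounds p m hp hm').
set e := ex p m in b1 b2 *. set X := (10^e)%N in b1 b2 *.
have X0 : (0 < X)%N by rewrite expn_gt0.
have hq := divn_eq m X; have hs := ltn_pmod m X0.
set q := (m %/ X)%N in hq; set s := (m %% X)%N in hq hs.
have hq1 : (10^(p-1) <= q)%N by rewrite leq_divRL.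
have hq2 : (q < 10^p)%N by rewrite ltn_divLR.
have hj := divn_eq q 10; have ht : (q %% 10 < 10)%N by rewrite ltn_pmod.
set j := (q %/ 10)%N in hj; set t := (q %% 10)%N in hj ht.
have hmq : m = ((10*j+t)*X + s)%N by rewrite {1}hq {1}hj; lia.
rewrite (@Gform p d m e j t s) //. rewrite hP2.
have [hsX|hsX] := ltnP s.+1 X.
  have hm1 : m.+1 = ((10*j+t)*X + s.+1)%N by rewrite hmq addnS.
  have he1 : ex p m.+1 = e.
    apply: ex_uniq; first lia. rewrite (leq_trans b1) //= -ltn_divLR // hm1 divE //.
    lia.
  rewrite (@Gform p d m.+1 e j t s.+1 he1 hm1) //.
  rewrite digitE he1 -/X (_ : (m.+1 %/ X = 10*j+t)%N); last by rewrite hm1 divE.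
  rewrite mod10 //.
  gfcases t t d.
have hsX' : s.+1 = X by apply/eqP; rewrite eqn_leq hs hsX.
have hM : m.+1 = (q.+1 * X)%N by rewrite {1}hq -addnS hsX' -mulSnr.
have [hqp|hqp] := ltnP q.+1 (10^p).
  have he1 : ex p m.+1 = e.
    apply: ex_uniq; first lia. rewrite (leq_trans b1) //= -ltn_divLR //.
    by rewrite hM mulnK.
  have [ht9|ht9] := ltnP t 9.
    have hm1 : m.+1 = ((10*j+t.+1)*X + 0)%N by rewrite hM hj; lia.
    rewrite (@Gform p d m.+1 e j t.+1 0 he1 hm1) //.
    rewrite digitE he1 -/X (_ : (m.+1 %/ X = 10*j+t.+1)%N); last by rewrite hm1 divE.
    rewrite mod10 //.
    gfcases t t.+1 d.
  have t9 : t = 9%N by lia.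
  have hm1 : m.+1 = ((10*(j.+1)+0)*X + 0)%N by rewrite hM hj t9; lia.
  rewrite (@Gform p d m.+1 e j.+1 0 0 he1 hm1) //.
  rewrite digitE he1 -/X (_ : (m.+1 %/ X = 10*j.+1+0)%N); last by rewrite hm1 divE.
  rewrite mod10 //.
  rewrite t9. gfcases 9%N 0%N d.
have hq9 : (q.+1 = 10^p)%N by apply/eqP; rewrite eqn_leq hqp hq2.
have t9 : t = 9%N by lia.
have j9 : j = (10 * P2' + 9)%N by lia.
have hm1 : m.+1 = ((10*(P2'.+1)+0)*10^e.+1 + 0)%N.
  rewrite hM hq9 hP expnS -/X; lia.
have he1 : ex p m.+1 = e.+1.
  apply: ex_uniq; first lia. rewrite hm1 hL hP !expnS -/X; apply/andP; split; nia.
rewrite (@Gform p d m.+1 e.+1 P2'.+1 0 0 he1 hm1) //.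
rewrite digitE he1 (_ : (m.+1 %/ 10^e.+1 = 10*P2'.+1+0)%N); last by rewrite hm1 divE ?expn_gt0.
rewrite mod10 //.
rewrite expnS -/X hmq t9 j9 ?hP2. gfcases 9%N 0%N d.
all: by rewrite expn_gt0.
Qed.

Lemma sumZ_eq a b f g : (forall x, a <= x <= b -> f x = g x) -> sumZ a b f = sumZ a b g.
Proof.
move=> H; rewrite /sumZ; case: ifP => // hab; apply: eq_bigr => i _; apply: H.
have := ltn_ord i; lia.
Qed.

Lemma sumZ_add a b f g : sumZ a b (fun x => f x + g x) = sumZ a b f + sumZ a b g.
Proof. rewrite /sumZ; case: ifP => _; [by rewrite big_split | by rewrite addr0]. Qed.

Lemma sumZ_exch a b (lo hi : nat) (F : int -> nat -> rat) :
  sumZ a b (fun i => \sum_(lo <= m < hi) F i m) = \sum_(lo <= m < hi) sumZ a b (fun i => F i m).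
Proof.
rewrite /sumZ; case: ifP => _; first by rewrite exchange_big.
by rewrite big1.
Qed.

Lemma sumZ_0 a b g : (forall x, a <= x <= b -> g x = 0) -> sumZ a b g = 0.
Proof.
move=> H; rewrite (@sumZ_eq a b g (fun _ => 0)) // /sumZ; case: ifP => // _.
by rewrite big1.
Qed.

Lemma sumZ_one a b c g : a <= c <= b -> (forall x, a <= x <= b -> x != c -> g x = 0) ->
  sumZ a b g = g c.
Proof.
move=> hc H; rewrite /sumZ ifT; last by lia.
have hi : (absz (c - a)%R < absz (b - a + 1)%R)%N by lia.
rewrite (bigD1 (Ordinal hi)) //= big1 ?addr0.
  congr g; lia.
move=> i /eqP hne; apply: H; first by have := ltn_ord i; lia.
apply/eqP => E; apply: hne; apply: val_inj => /=; lia.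
Qed.

Lemma sumZ_win a b f (lo hi : nat) : (forall x, a <= x <= b -> lo%:Z <= x < hi%:Z) ->
  sumZ a b f = \sum_(lo <= m < hi) (if (a <= m%:Z <= b) then f m%:Z else 0).
Proof.
move=> H; rewrite /sumZ; case: ifP => hab; last first.
  by rewrite big1 // => m _; case: ifP => //; lia.
have ha : lo%:Z <= a < hi%:Z by apply: H; rewrite lexx hab.
have hb : lo%:Z <= b < hi%:Z by apply: H; rewrite lexx hab.
case: a ha hab H => [a'|//] ha; case: b hb => [b'|//] hb hab H.
rewrite (big_cat_nat (n := a')) /=; [|lia|lia].
rewrite (big_cat_nat (m := a') (n := b'.+1)) /=; [|lia|lia].
rewrite [X in _ = X + _]big1_seq ?add0r; last first.
  by move=> m; rewrite mem_index_iota => hm; case: ifP => //; lia.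
rewrite [X in _ = _ + X]big1_seq ?addr0; last first.
  by move=> m; rewrite mem_index_iota => hm; case: ifP => //; lia.
rewrite [in RHS](_ : a' = 0 + a')%N // big_addn big_mkord (_ : absz (b'%:Z - a'%:Z + 1)%R = b'.+1 - a')%N; last by lia.
apply: eq_bigr => i _; rewrite ifT; last by have := ltn_ord i; lia.
congr f; lia.
Qed.

Lemma leMX (a : int) (i m : nat) : (a * (10^i)%N%:Z <= m%:Z) = (a <= (m %/ 10^i)%N%:Z).
Proof.
have X0 : (0 < 10^i)%N by rewrite expn_gt0.
case: a => [a|a].
  by rewrite -PoszM !lez_nat leq_divRL.
rewrite NegzE mulNr -PoszM.
have h1 : - (a.+1 * 10^i)%N%:Z <= m%:Z by move: (a.+1 * 10^i)%N => y; lia.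
have h2 : - (a.+1)%:Z <= (m %/ 10^i)%N%:Z by move: (m %/ 10^i)%N => y; lia.
by rewrite h1 h2.
Qed.

Lemma leXM (b : int) (i m : nat) : (m%:Z <= b * (10^i)%N%:Z - 1) = ((m %/ 10^i)%N%:Z <= b - 1).
Proof.
have X0 : (0 < 10^i)%N by rewrite expn_gt0.
case: b => [b|b].
  rewrite -PoszM; have := ltn_divLR m b X0.
  move: (m %/ 10^i)%N (b * 10^i)%N => u v E; apply/idP/idP => H.
    have h : (m < v)%N by lia.
    by rewrite -E in h; lia.
  have h : (u < b)%N by lia.
  by rewrite E in h; lia.
rewrite NegzE mulNr -PoszM.
have h1 : (m%:Z <= - (b.+1 * 10^i)%N%:Z - 1) = false by apply/negbTE; move: (b.+1 * 10^i)%N => y; lia.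
have h2 : ((m %/ 10^i)%N%:Z <= - (b.+1)%:Z - 1) = false by apply/negbTE; move: (m %/ 10^i)%N => y; lia.
by rewrite h1 h2.
Qed.

Lemma p10S (p i : nat) : (1 <= p)%N -> p10 (p%:Z + i%:Z - 1) = (10^(p-1))%N%:Z * (10^i)%N%:Z.
Proof. move=> hp; rewrite (_ : p%:Z + i%:Z - 1 = (p - 1 + i)%N%:Z); last by lia.
by rewrite p10n expnD PoszM. Qed.

Lemma p10T (p i : nat) : p10 (p%:Z + i%:Z) = (10^p)%N%:Z * (10^i)%N%:Z.
Proof. by rewrite -PoszD p10n expnD PoszM. Qed.

Lemma p10m1 (p : nat) : (1 <= p)%N -> p10 (p%:Z - 1) = (10^(p-1))%N%:Z.
Proof. by move=> hp; rewrite (_ : p%:Z - 1 = (p - 1)%N%:Z) ?p10n //; lia. Qed.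

Lemma p10m2 (p : nat) : (2 <= p)%N -> p10 (p%:Z - 2) = (10^(p-2))%N%:Z.
Proof. by move=> hp; rewrite (_ : p%:Z - 2 = (p - 2)%N%:Z) ?p10n //; lia. Qed.

Lemma exQ p m i : (1 <= p)%N -> (10^(p-1) <= m %/ 10^i < 10^p)%N -> ex p m = i.
Proof.
move=> hp /andP[h1 h2]; apply: ex_uniq => //.
by rewrite -leq_divRL ?expn_gt0 // h1 -ltn_divLR ?expn_gt0.
Qed.

Definition F p d m : rat := (Nd p d m)%:R / (m.+1 - 10^(p-1))%N%:R.

Lemma F_frac p d m : (2 <= p)%N -> (d <= 9)%N -> (10^(p-1) <= m)%N ->
  F p d m = (G p d m)%:~R / (m%:Z + 1 - p10 (p%:Z - 1))%:~R.
Proof.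
move=> hp hd hm; rewrite /F -Nd_closed // p10m1; last lia.
by rewrite (_ : m%:Z + 1 - (10^(p-1))%N%:Z = (m.+1 - 10^(p-1))%N%:Z); last lia.
Qed.

Definition SB p d (i : int) (m : nat) : rat :=
  sumZ (p10 (p%:Z - 2)) (p10 (p%:Z - 1) - 1) (fun j =>
    if (10 * j + d%:Z) * p10 i <= m%:Z <= (10 * j + (d%:Z + 1)) * p10 i - 1
    then fracB p d i j m%:Z else 0).

Definition SA p d (i : int) (m : nat) : rat :=
  sumZ (p10 (p%:Z - 2) - 1) (p10 (p%:Z - 1) - 1) (fun j =>
    if Num.max (p10 (p%:Z + i - 1)) ((10 * j + (d%:Z + 1)) * p10 i) <= m%:Z <=
       Num.min (p10 (p%:Z + i) - 1) ((10 * (j + 1) + d%:Z) * p10 i - 1)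
    then fracA p i j m%:Z else 0).

Lemma S_blk p d m i : (2 <= p)%N -> (d <= 9)%N -> (10^(p-1) <= m)%N ->
  SB p d i%:Z m + SA p d i%:Z m = if ex p m == i then F p d m else 0.
Proof.
move=> hp hd hm.
have hp1 : (1 <= p)%N by lia.
have hL : (10^(p-1) = 10 * 10^(p-2))%N by rewrite -expnS; congr (expn _ _); lia.
have hP : (10^p = 100 * 10^(p-2))%N by rewrite (_ : 100 = 10^2)%N // -expnD; congr (expn _ _); lia.
have P20 : (0 < 10^(p-2))%N by rewrite expn_gt0.
rewrite /SB /SA (p10S p i) ?(p10T p i) ?p10m1 ?p10m2 ?p10n //; try lia.
set X := (10^i)%N.
have X0 : (0 < X)%N by rewrite expn_gt0.
set q := (m %/ X)%N. have hq : (m %/ 10^i)%N = q by [].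
have hmq : m = (q * X + m %% X)%N := divn_eq m X; have hs := ltn_pmod m X0.
set s := (m %% X)%N in hmq hs.
have hj : q = (q %/ 10 * 10 + q %% 10)%N := divn_eq q 10; have ht : (q %% 10 < 10)%N by rewrite ltn_pmod.
set j0 := (q %/ 10)%N in hj; set t0 := (q %% 10)%N in hj ht.
have hm' : m = ((10*j0+t0)*X + s)%N by rewrite {1}hmq {1}hj; lia.
clearbody q j0 t0 s.
case: eqP => [he|hne]; last first.
  have Hq : ~ (10^(p-1) <= q < 10^p)%N.
    move=> hb; apply: hne; apply: exQ; first lia. by rewrite hq.
  rewrite !sumZ_0 ?addr0 // => x hx; case: ifP => // H; exfalso; apply: Hq.
    rewrite ?ge_max ?le_min !leMX !leXM hq in H.
    move: H; clear -hL hP hx; lia.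
  rewrite !leMX !leXM hq in H.
  move: H; clear -hL hP hx hd; lia.
have /andP[b1 b2] := @ex_bounds p m hp hm; rewrite he -/X in b1 b2.
have hq1 : (10^(p-1) <= q)%N by rewrite -hq leq_divRL.
have hq2 : (q < 10^p)%N by rewrite -hq ltn_divLR.
rewrite F_frac // (@Gform p d m i j0 t0 s he hm' ht hs) p10m1; last lia.
case: (t0 =P d) => [htd|htd].
  rewrite (@sumZ_one _ _ j0%:Z); first last.
  - move=> x hx hne; case: ifP => // H.
    rewrite !leMX !leXM hq in H. exfalso; move: H hne; clear -hx hj htd; lia.
  - lia.
  rewrite sumZ_0 ?addr0; last first.
    move=> x hx; case: ifP => // H; exfalso.
    rewrite ?ge_max ?le_min !leMX !leXM hq in H.
    move: H; clear -hL hP hx hj htd; lia.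
  rewrite ifT; last by rewrite !leMX !leXM hq; lia.
  rewrite /fracB /Gf htd eqxx p10n (@p10m1 p hp1) (@p10m2 p hp); congr (_ / _); congr (_%:~R); lia.
rewrite sumZ_0 ?add0r; last first.
  move=> x hx; case: ifP => // H; exfalso.
  rewrite !leMX !leXM hq in H.
  move: H; clear -hx hj htd ht hd; lia.
have hne : (t0 == d) = false by apply/eqP.
case: (ltnP d t0) => hdt.
  rewrite (@sumZ_one _ _ j0%:Z); first last.
  - move=> x hx hne'; case: ifP => // H.
    rewrite ?ge_max ?le_min !leMX !leXM hq in H. exfalso; move: H hne'; clear -hx hj hdt ht; lia.
  - lia.
  rewrite ifT; last by rewrite ?ge_max ?le_min !leMX !leXM hq; lia.
  rewrite /fracA /Gf hne hdt p10n (@p10m1 p hp1) (@p10m2 p hp); congr (_ / _); congr (_%:~R); lia.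
rewrite (@sumZ_one _ _ (j0%:Z - 1)); first last.
- move=> x hx hne'; case: ifP => // H.
  rewrite ?ge_max ?le_min !leMX !leXM hq in H. exfalso; move: H hne'; clear -hx hj hdt ht htd hd => H /eqP; lia.
- lia.
rewrite ifT; last by rewrite ?ge_max ?le_min !leMX !leXM hq; lia.
have hdt' : (d < t0)%N = false by apply/negbTE; rewrite -leqNgt.
rewrite /fracA /Gf hne hdt' p10n (@p10m1 p hp1) (@p10m2 p hp); congr (_ / _); congr (_%:~R); lia.
Qed.

Definition RT p d n (K : nat) (l : int) (m : nat) : rat :=
  if pth_digit p n == d then
    sumZ (p10 (p%:Z - 2)) l (fun j =>
      if (10 * j + d%:Z) * p10 K <= m%:Z <= Num.min n%:Z ((10 * j + (d%:Z + 1)) * p10 K - 1)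
      then fracB p d K j m%:Z else 0)
    + sumZ (p10 (p%:Z - 2) - 1) (l - 1) (fun j =>
      if Num.max (p10 (p%:Z + K%:Z - 1)) ((10 * j + (d%:Z + 1)) * p10 K) <= m%:Z <=
           (10 * (j + 1) + d%:Z) * p10 K - 1
      then fracA p K j m%:Z else 0)
  else
    sumZ (p10 (p%:Z - 2)) l (fun j =>
      if (10 * j + d%:Z) * p10 K <= m%:Z <= (10 * j + (d%:Z + 1)) * p10 K - 1
      then fracB p d K j m%:Z else 0)
    + sumZ (p10 (p%:Z - 2) - 1) l (fun j =>
      if Num.max (p10 (p%:Z + K%:Z - 1)) ((10 * j + (d%:Z + 1)) * p10 K) <= m%:Z <=
           Num.min n%:Z ((10 * (j + 1) + d%:Z) * p10 K - 1)
      then fracA p K j m%:Z else 0).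

Lemma R_blk p d n K l m : (2 <= p)%N -> (d <= 9)%N -> (10^(p-1) <= m)%N -> (m <= n)%N ->
  ex p n = K ->
  10 * l + d%:Z <= (n %/ 10^K)%N%:Z <= 10 * l + d%:Z + 9 ->
  RT p d n K l m = if ex p m == K then F p d m else 0.
Proof.
move=> hp hd hm hmn hK hl.
have hp1 : (1 <= p)%N by lia.
have hL : (10^(p-1) = 10 * 10^(p-2))%N by rewrite -expnS; congr (expn _ _); lia.
have hP : (10^p = 100 * 10^(p-2))%N by rewrite (_ : 100 = 10^2)%N // -expnD; congr (expn _ _); lia.
have P20 : (0 < 10^(p-2))%N by rewrite expn_gt0.
have hn : (10^(p-1) <= n)%N by apply: leq_trans hmn.
have /andP[n1 n2] := @ex_bounds p n hp hn; rewrite hK in n1 n2.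
rewrite /RT digitE hK (p10S p K) ?p10m1 ?p10m2 ?p10n //; try lia.
set X := (10^K)%N in n1 n2 *.
have X0 : (0 < X)%N by rewrite expn_gt0.
set q := (m %/ X)%N. have hq : (m %/ 10^K)%N = q by [].
have hqn1 : (10^(p-1) <= n %/ X)%N by rewrite leq_divRL.
have hqn2 : (n %/ X < 10^p)%N by rewrite ltn_divLR.
have hqq : (q <= n %/ X)%N by rewrite leq_div2r.
have hmq : m = (q * X + m %% X)%N := divn_eq m X; have hs := ltn_pmod m X0.
set s := (m %% X)%N in hmq hs.
have hj : q = (q %/ 10 * 10 + q %% 10)%N := divn_eq q 10.
have ht : (q %% 10 < 10)%N by rewrite ltn_pmod.
set j0 := (q %/ 10)%N in hj; set t0 := (q %% 10)%N in hj ht.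
have hm' : m = ((10*j0+t0)*X + s)%N by rewrite {1}hmq {1}hj; lia.
have hjn : (n %/ X = (n %/ X) %/ 10 * 10 + (n %/ X) %% 10)%N := divn_eq _ 10.
have htn : ((n %/ X) %% 10 < 10)%N by rewrite ltn_pmod.
rewrite -/X in hl.
move: hl hqn1 hqn2 hqq hjn htn.
set qn := (n %/ X)%N; set jn := (qn %/ 10)%N; set tn := (qn %% 10)%N.
clearbody q j0 t0 s qn jn tn => hl hqn1 hqn2 hqq hjn htn.
case: (ex p m =P K) => [he|hne]; last first.
  have Hq : ~ (10^(p-1) <= q < 10^p)%N.
    move=> hb; apply: hne. apply: exQ; first lia. by rewrite hq.
  case: ifP => hdig; rewrite !sumZ_0 ?addr0 // => x hx; case: ifP => // H; exfalso; apply: Hq;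
    rewrite ?ge_max ?le_min ?leMX ?leXM hq in H; move: H; clear -hL hP hx hd hl hqn1 hqn2 hqq hjn htn hdig; lia.
have /andP[b1 b2] := @ex_bounds p m hp hm; rewrite he -/X in b1 b2.
have hq1 : (10^(p-1) <= q)%N by rewrite -hq leq_divRL.
have hq2 : (q < 10^p)%N by rewrite -hq ltn_divLR.
rewrite F_frac // (@Gform p d m K j0 t0 s he hm' ht hs) p10m1; last lia.
have hmn' : m%:Z <= n%:Z by lia.
have hnd : (tn == d) = false \/ tn = d by case: eqP; [right | left].
case: hnd => hdig; rewrite hdig ?eqxx.
all: case: (t0 =P d) => [htd|htd].
- rewrite (@sumZ_one _ _ j0%:Z); first last.
  + move=> x hx hne; case: ifP => // H.
    rewrite !leMX !leXM hq in H. exfalso; move: H hne; clear -hx hj htd => H /eqP; lia.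
  + lia.
  rewrite sumZ_0 ?addr0; last first.
    move=> x hx; case: ifP => // H; exfalso.
    rewrite ?ge_max ?le_min !leMX !leXM hq in H.
    move: H; clear -hL hP hx hj htd; lia.
  rewrite ifT; last by rewrite !leMX !leXM hq; lia.
  rewrite /fracB /Gf htd eqxx p10n (@p10m1 p hp1) (@p10m2 p hp); congr (_ / _); congr (_%:~R); lia.
- rewrite sumZ_0 ?add0r; last first.
    move=> x hx; case: ifP => // H; exfalso.
    rewrite !leMX !leXM hq in H.
    move: H; clear -hx hj htd ht hd; lia.
  have hne : (t0 == d) = false by apply/eqP.
  case: (ltnP d t0) => hdt.
    rewrite (@sumZ_one _ _ j0%:Z); first last.
    + move=> x hx hne'; case: ifP => // H.
      rewrite ?ge_max ?le_min !leMX !leXM hq in H. exfalso; move: H hne'; clear -hx hj hdt ht hd => H /eqP; lia.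
    + lia.
    rewrite ifT; last by rewrite ?ge_max ?le_min !leMX !leXM hq; lia.
    rewrite /fracA /Gf hne hdt p10n (@p10m1 p hp1) (@p10m2 p hp); congr (_ / _); congr (_%:~R); lia.
  rewrite (@sumZ_one _ _ (j0%:Z - 1)); first last.
  + move=> x hx hne'; case: ifP => // H.
    rewrite ?ge_max ?le_min !leMX !leXM hq in H. exfalso; move: H hne'; clear -hx hj hdt ht htd hd => H /eqP; lia.
  + lia.
  rewrite ifT; last by rewrite ?ge_max ?le_min !leMX !leXM hq; lia.
  have hdt' : (d < t0)%N = false by apply/negbTE; rewrite -leqNgt.
  rewrite /fracA /Gf hne hdt' p10n (@p10m1 p hp1) (@p10m2 p hp); congr (_ / _); congr (_%:~R); lia.

- rewrite (@sumZ_one _ _ j0%:Z); first last.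
  + move=> x hx hne; case: ifP => // H.
    rewrite ?ge_max ?le_min !leMX !leXM hq in H. exfalso; move: H hne; clear - hmn' hl hjn htn hdig hqq hx hj htd => H /eqP; lia.
  + lia.
  rewrite sumZ_0 ?addr0; last first.
    move=> x hx; case: ifP => // H; exfalso.
    rewrite ?ge_max ?le_min !leMX !leXM hq in H.
    move: H; clear - hmn' hl hjn htn hdig hqq hL hP hx hj htd; lia.
  rewrite ifT; last by rewrite ?ge_max ?le_min !leMX !leXM hq; lia.
  rewrite /fracB /Gf htd eqxx p10n (@p10m1 p hp1) (@p10m2 p hp); congr (_ / _); congr (_%:~R); lia.
- rewrite sumZ_0 ?add0r; last first.
    move=> x hx; case: ifP => // H; exfalso.
    rewrite ?ge_max ?le_min !leMX !leXM hq in H.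
    move: H; clear - hmn' hl hjn htn hdig hqq hx hj htd ht hd; lia.
  have hne : (t0 == d) = false by apply/eqP.
  case: (ltnP d t0) => hdt.
    rewrite (@sumZ_one _ _ j0%:Z); first last.
    + move=> x hx hne'; case: ifP => // H.
      rewrite ?ge_max ?le_min !leMX !leXM hq in H. exfalso; move: H hne'; clear - hmn' hl hjn htn hdig hqq hx hj hdt ht hd => H /eqP; lia.
    + lia.
    rewrite ifT; last by rewrite ?ge_max ?le_min !leMX !leXM hq; lia.
    rewrite /fracA /Gf hne hdt p10n (@p10m1 p hp1) (@p10m2 p hp); congr (_ / _); congr (_%:~R); lia.
  rewrite (@sumZ_one _ _ (j0%:Z - 1)); first last.
  + move=> x hx hne'; case: ifP => // H.
    rewrite ?ge_max ?le_min !leMX !leXM hq in H. exfalso; move: H hne'; clear - hmn' hl hjn htn hdig hqq hx hj hdt ht htd hd => H /eqP; lia.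
  + lia.
  rewrite ifT; last by rewrite ?ge_max ?le_min !leMX !leXM hq; lia.
  have hdt' : (d < t0)%N = false by apply/negbTE; rewrite -leqNgt.
  rewrite /fracA /Gf hne hdt' p10n (@p10m1 p hp1) (@p10m2 p hp); congr (_ / _); congr (_%:~R); lia.

Qed.

Lemma sumZ_exch_win a b (A B : int -> int) (f : int -> int -> rat) (lo hi : nat) :
  (forall j x, a <= j <= b -> A j <= x <= B j -> lo%:Z <= x < hi%:Z) ->
  sumZ a b (fun j => sumZ (A j) (B j) (f j)) =
  \sum_(lo <= m < hi) sumZ a b (fun j => if A j <= m%:Z <= B j then f j m%:Z else 0).
Proof.
move=> H.
rewrite (@sumZ_eq a b _ (fun j => \sum_(lo <= m < hi) (if A j <= m%:Z <= B j then f j m%:Z else 0))).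
  by rewrite sumZ_exch.
by move=> j hj; apply: sumZ_win => x hx; exact: (H j x hj hx).
Qed.

Lemma floor_div (N D : int) : 0 < D ->
  Num.floor (N%:~R / D%:~R : rat) * D <= N < (Num.floor (N%:~R / D%:~R : rat) + 1) * D.
Proof.
move=> hD; have /andP[h1 h2] := floor_itv (N%:~R / D%:~R : rat).
have hD' : (0 : rat) < D%:~R by rewrite ltr0z.
rewrite ler_pdivlMr // ltr_pdivrMr // in h1 h2.
by rewrite -!intrM ler_int ltr_int in h1 h2; rewrite h1 h2.
Qed.

Lemma int_nat (x : int) : 0 <= x -> exists x' : nat, x = x'%:Z.
Proof. by case: x => // x' _; exists x'. Qed.

Lemma div_lt x y X : (x %/ X < y %/ X)%N -> (x < y)%N.
Proof. by move=> h; rewrite ltnNge; apply/negP => /(leq_div2r X); rewrite leqNgt h. Qed.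

Lemma lowQ p x K : (10^(p-1) <= x %/ 10^K)%N -> (10^(p-1) <= x)%N.
Proof.
move=> h; rewrite leq_divRL ?expn_gt0 // in h.
by apply: leq_trans h; rewrite leq_pmulr ?expn_gt0.
Qed.

Lemma highS p K i x n : (1 <= p)%N -> (i < K)%N -> (10^(p-1) * 10^K <= n)%N ->
  (x %/ 10^i < 10^p)%N -> (x <= n)%N.
Proof.
move=> hp hiK hn h; rewrite ltn_divLR ?expn_gt0 // in h.
apply: ltnW; apply: (leq_trans h); apply: leq_trans hn.
rewrite (_ : 10^p = 10^(p-1) * 10)%N; last by rewrite -expnSr; congr (expn _ _); lia.
rewrite -mulnA leq_pmul2l ?expn_gt0 // -expnS leq_exp2l //.
Qed.

Lemma nonneg_mul (a : int) (b : nat) : 0 <= a -> 0 <= a * b%:Z.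
Proof. by move=> ha; apply: mulr_ge0. Qed.
Theorem proposition1 (p d n : nat) (k : int) :
  (2 <= p)%N -> (d <= 9)%N -> (10 ^ (p - 1) <= n)%N ->
  (* k = max { i in N | 10^(i+p) <= n }, and k = -1 if this set is empty *)
  ((k = -1 /\ (forall i : nat, ~ (10 ^ (i + p) <= n)%N)) \/
   (exists i : nat, k = i%:Z /\ (10 ^ (i + p) <= n)%N /\
      (forall i' : nat, (10 ^ (i' + p) <= n)%N -> (i' <= i)%N))) ->
  let l : int :=
    Num.floor ((n%:Z - (p10 (p%:Z - 1) + d%:Z) * p10 (k + 1))%:~R
               / (p10 (k + 2))%:~R : rat) + p10 (p%:Z - 2) in
  Prob d n p =
  ((n.+1 - 10 ^ (p - 1))%N%:R)^-1 *
  (sumZ 0 k (fun i =>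
      sumZ (p10 (p%:Z - 2)) (p10 (p%:Z - 1) - 1) (fun j =>
        sumZ ((10 * j + d%:Z) * p10 i) ((10 * j + (d%:Z + 1)) * p10 i - 1)
             (fun b => fracB p d i j b))
    + sumZ (p10 (p%:Z - 2) - 1) (p10 (p%:Z - 1) - 1) (fun j =>
        sumZ (Num.max (p10 (p%:Z + i - 1)) ((10 * j + (d%:Z + 1)) * p10 i))
             (Num.min (p10 (p%:Z + i) - 1) ((10 * (j + 1) + d%:Z) * p10 i - 1))
             (fun a => fracA p i j a)))
   + r_term n d p k l).

Proof.
move=> hp hd hn hk l.
have hp1 : (1 <= p)%N by lia.
have hL : (10^(p-1) = 10 * 10^(p-2))%N by rewrite -expnS; congr (expn _ _); lia.
have hP : (10^p = 100 * 10^(p-2))%N by rewrite (_ : 100 = 10^2)%N // -expnD; congr (expn _ _); lia.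
have P20 : (0 < 10^(p-2))%N by rewrite expn_gt0.
have [K [hK hkK]] : exists K, ex p n = K /\ k = K%:Z - 1.
  case: hk => [[-> hno]|[kk [-> [h1 h2]]]].
    exists 0%N; split => //; apply: ex_uniq => //; rewrite !muln1 hn /= ltnNge.
    by apply/negP => h; apply: (hno 0%N); rewrite add0n.
  exists kk.+1; split; last by lia.
  apply: ex_uniq => //; rewrite -!expnD; apply/andP; split.
    by rewrite (_ : p - 1 + kk.+1 = kk + p)%N //; lia.
  rewrite ltnNge; apply/negP => h; have := h2 kk.+1; rewrite (_ : kk.+1 + p = p + kk.+1)%N; last lia.
  by move=> /(_ h); lia.
subst k.
have /andP[n1 n2] := @ex_bounds p n hp hn; rewrite hK in n1 n2.
have X0 : (0 < 10^K)%N by rewrite expn_gt0.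
have hl : 10 * l + d%:Z <= (n %/ 10^K)%N%:Z <= 10 * l + d%:Z + 9.
  rewrite /l.
  rewrite (_ : K%:Z - 1 + 1 = K%:Z); last lia.
  rewrite (_ : K%:Z - 1 + 2 = (K.+1)%:Z); last lia.
  rewrite !p10n (@p10m1 p hp1) (@p10m2 p hp) hL expnS !PoszM.
  have := @floor_div (n%:Z - (10 * (10 ^ (p - 2))%N%:Z + d%:Z) * (10^K)%N%:Z) (10 * (10^K)%N%:Z).
  move=> /(_ _) /andP [].
    by apply: mulr_gt0 => //; rewrite ltz_nat.
  set z := Num.floor _ => h1 h2.
  have e1 : (10 * (z + (10 ^ (p - 2))%N%:Z) + d%:Z) * (10^K)%N%:Z <= n%:Z by lia.
  have e2 : n%:Z <= (10 * (z + (10 ^ (p - 2))%N%:Z) + d%:Z + 10) * (10^K)%N%:Z - 1 by lia.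
  rewrite leMX in e1; rewrite leXM in e2. lia.
rewrite /Prob; congr (_ * _).
rewrite [X in _ = X + _](_ : _ = \sum_(10^(p-1) <= m < n.+1) sumZ 0 (K%:Z - 1) (fun i => SB p d i m + SA p d i m)); last first.
  rewrite -sumZ_exch; apply: sumZ_eq => i hi; rewrite big_split /SB /SA.
  rewrite (@sumZ_exch_win _ _ _ _ _ (10^(p-1)) n.+1); last first.
    move=> j x hj hx.
    have [i' ei] : exists i' : nat, i = i'%:Z by apply: int_nat; lia.
    subst i. have hi' : (i' < K)%N by lia.
    rewrite (@p10m1 p hp1) (@p10m2 p hp) in hj.
    rewrite p10n in hx.
    have x0 : 0 <= x.
      by move: hx => /andP[+ _]; apply: le_trans; apply: nonneg_mul; lia.
    have [x' ex'] := @int_nat x x0; subst x.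
    rewrite leMX leXM in hx.
    have /andP[hQ1 hQ2] : (10^(p-1) <= x' %/ 10^i' < 10^p)%N.
      by move: hx hj; move: (x' %/ 10^i')%N => Q; lia.
    have h1 := @lowQ p x' i' hQ1; have h2 := @highS p K i' x' n hp1 hi' n1 hQ2; lia.
  rewrite (@sumZ_exch_win _ _ _ _ _ (10^(p-1)) n.+1); last first.
    move=> j x hj hx.
    have [i' ei] : exists i' : nat, i = i'%:Z by apply: int_nat; lia.
    subst i. have hi' : (i' < K)%N by lia.
    rewrite (@p10m1 p hp1) (@p10m2 p hp) in hj.
    rewrite (p10S p i') in hx; last lia.
    rewrite (p10T p i') p10n in hx.
    have x0 : 0 <= x.
      by move: hx; rewrite ge_max => /andP[/andP[+ _] _]; apply: le_trans; apply: nonneg_mul; lia.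
    have [x' ex'] := @int_nat x x0; subst x.
    rewrite ge_max le_min !leMX !leXM in hx.
    have /andP[hQ1 hQ2] : (10^(p-1) <= x' %/ 10^i' < 10^p)%N.
      by move: hx hj; move: (x' %/ 10^i')%N => Q; lia.
    have h1 := @lowQ p x' i' hQ1; have h2 := @highS p K i' x' n hp1 hi' n1 hQ2; lia.
  by [].
rewrite [X in _ = _ + X](_ : _ = \sum_(10^(p-1) <= m < n.+1) RT p d n K l m); last first.
  rewrite /r_term /RT (_ : K%:Z - 1 + 1 = K%:Z); last lia.
  rewrite (_ : p%:Z + (K%:Z - 1) = p%:Z + K%:Z - 1); last lia.
  case: ifP => hdig; rewrite big_split.
    rewrite (@sumZ_exch_win _ _ _ _ _ (10^(p-1)) n.+1); last first.
      move=> j x hj hx.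
      rewrite (@p10m2 p hp) in hj. rewrite p10n in hx.
      have x0 : 0 <= x by move: hx => /andP[+ _]; apply: le_trans; apply: nonneg_mul; lia.
      have [x' ex'] := @int_nat x x0; subst x.
      rewrite le_min leMX leXM in hx.
      have hQ1 : (10^(p-1) <= x' %/ 10^K)%N by move: hx hj; move: (x' %/ 10^K)%N => Q; lia.
      have h1 := @lowQ p x' K hQ1; lia.
    rewrite (@sumZ_exch_win _ _ _ _ _ (10^(p-1)) n.+1); last first.
      move=> j x hj hx.
      rewrite (@p10m2 p hp) in hj. rewrite (p10S p K) in hx; last lia.
      rewrite p10n in hx.
      have x0 : 0 <= x.
        by move: hx; rewrite ge_max => /andP[/andP[+ _] _]; apply: le_trans; apply: nonneg_mul; lia.
      have [x' ex'] := @int_nat x x0; subst x.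
      rewrite ge_max !leMX leXM in hx.
      have hd' : ((n %/ 10^K) %% 10 = d)%N by rewrite digitE hK in hdig; apply/eqP.
      have hQ1 : (10^(p-1) <= x' %/ 10^K)%N by move: hx; move: (x' %/ 10^K)%N => Q; lia.
      have hQ2 : (x' %/ 10^K < n %/ 10^K)%N.
        by move: hx hj hl hd'; move: (x' %/ 10^K)%N (n %/ 10^K)%N => Q qn; lia.
      have h1 := @lowQ p x' K hQ1; have h2 := @div_lt x' n (10^K) hQ2; lia.
    by [].
  rewrite (@sumZ_exch_win _ _ _ _ _ (10^(p-1)) n.+1); last first.
    move=> j x hj hx.
    rewrite (@p10m2 p hp) in hj. rewrite p10n in hx.
    have x0 : 0 <= x by move: hx => /andP[+ _]; apply: le_trans; apply: nonneg_mul; lia.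
    have [x' ex'] := @int_nat x x0; subst x.
    rewrite leMX leXM in hx.
    have hd' : ((n %/ 10^K) %% 10 <> d)%N by rewrite digitE hK in hdig; move/eqP; rewrite hdig.
    have hQ1 : (10^(p-1) <= x' %/ 10^K)%N by move: hx hj; move: (x' %/ 10^K)%N => Q; lia.
    have hQ2 : (x' %/ 10^K < n %/ 10^K)%N.
      by move: hx hj hl hd'; move: (x' %/ 10^K)%N (n %/ 10^K)%N => Q qn; lia.
    have h1 := @lowQ p x' K hQ1; have h2 := @div_lt x' n (10^K) hQ2; lia.
  rewrite (@sumZ_exch_win _ _ _ _ _ (10^(p-1)) n.+1); last first.
    move=> j x hj hx.
    rewrite (@p10m2 p hp) in hj. rewrite (p10S p K) in hx; last lia.
      rewrite p10n in hx.
    have x0 : 0 <= x.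
      by move: hx; rewrite ge_max => /andP[/andP[+ _] _]; apply: le_trans; apply: nonneg_mul; lia.
    have [x' ex'] := @int_nat x x0; subst x.
    rewrite ge_max le_min !leMX leXM in hx.
    have hQ1 : (10^(p-1) <= x' %/ 10^K)%N by move: hx; move: (x' %/ 10^K)%N => Q; lia.
    have h1 := @lowQ p x' K hQ1; lia.
  by [].
rewrite -big_split; apply: eq_big_nat => m /andP[hm1 hm2].
rewrite (@R_blk p d n K l m) //.
change (F p d m = sumZ 0 (K%:Z - 1) (fun i => SB p d i m + SA p d i m) + (if ex p m == K then F p d m else 0)).
have hmL : (10^(p-1) <= m)%N by [].
have /andP[m1 m2] := @ex_bounds p m hp hmL.
have heK : (ex p m <= K)%N.
  have h : (10^(p-1) * 10^(ex p m) < 10^(p-1) * 10^K.+1)%N.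
    have -> : (10^(p-1) * 10^K.+1 = 10^p * 10^K)%N.
      by rewrite expnS mulnA -expnSr; congr (_ * _)%N; congr (expn _ _); lia.
    lia.
  rewrite ltn_pmul2l ?expn_gt0 // ltn_exp2l // in h.
case: (ex p m =P K) => [he|hne].
  rewrite sumZ_0 ?add0r // => x hx.
  have [x' ex'] : exists x' : nat, x = x'%:Z by apply: int_nat; lia.
  subst x; rewrite S_blk // ifF //; apply/negbTE/eqP; lia.
rewrite (@sumZ_one _ _ (ex p m)%:Z); last first.
  move=> x hx hne'.
  have [x' ex'] : exists x' : nat, x = x'%:Z by apply: int_nat; lia.
  rewrite ex' S_blk // ifF //; apply/eqP => E; move: hne'; rewrite ex' -E eqxx.
  by [].
  lia.
by rewrite S_blk // eqxx addr0.
Qed.
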